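(* For every $r\ge1$ and every $z\in\mathbb{C}$ with $z\ne0$, there is an algebra isomorphism $\mathcal{P}'_r(z)\cong\mathcal{P}'_r(1)$, and $\mathcal{P}'_r(1)$ is the semigroup algebra $\mathbb{C}\mathcal{P}'_r$ of the rook monoid $\mathcal{P}'_r$.
   Context: A partial permutation of $\{1,\dots,r\}$ is a bijection $d:X\to Y$ between subsets $X=\mathrm{dom}(d)$, $Y=\mathrm{im}(d)$ of $\{1,\dots,r\}$; maps are written on the right and composed by $x(d_1\circ d_2)=(xd_1)d_2$. The rook monoid $\mathcal{P}'_r$ is the monoid of all partial permutations of $\{1,\dots,r\}$ under this composition. For $z\in\mathbb{C}$, $\mathcal{P}'_r(z)$ is the algebra with basis $\mathcal{P}'_r$ and product $d_1d_2=z^{N}(d_1\circ d_2)$ with $N=r-|\mathrm{im}(d_1)\cup\mathrm{dom}(d_2)|$ (the subalgebra of the partition algebra $\mathcal{P}_r(z)$ spanned by partial permutation diagrams). *)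

(* Defs.v *)
From mathcomp Require Import all_boot all_algebra.
From mathcomp Require Import Rstruct.
From mathcomp Require Import complex.
Set Implicit Arguments. Unset Strict Implicit. Unset Printing Implicit Defensive.
Import GRing.Theory.
Local Open Scope ring_scope.

Definition CC : fieldType := (Rdefinitions.R)[i].

(* Partial permutations of {1..r}, encoded on 'I_r as partial maps
   x |-> Some (x d) (x in dom d) or None (x notin dom d), injective on
   their domain. *)
Definition is_pperm (r : nat) (f : {ffun 'I_r -> option 'I_r}) : bool :=
  [forall x, forall y, (f x != None) ==> (f x == f y) ==> (x == y)].

Definition pperm (r : nat) := {f : {ffun 'I_r -> option 'I_r} | is_pperm f}.

Definition pdom (r : nat) (d : pperm r) : {set 'I_r} :=
  [set x | val d x != None].
Definition pim (r : nat) (d : pperm r) : {set 'I_r} :=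
  [set y | [exists x, val d x == Some y]].

(* Composition, maps written on the right: x (d1 o d2) = (x d1) d2. *)
Definition pcomp_fun (r : nat) (d1 d2 : pperm r) : {ffun 'I_r -> option 'I_r} :=
  [ffun x => obind (val d2) (val d1 x)].

Lemma pcomp_proof (r : nat) (d1 d2 : pperm r) : is_pperm (pcomp_fun d1 d2).
Proof.
case: d1 d2 => [f1 h1] [f2 h2]; apply/forallP => x; apply/forallP => y.
apply/implyP; rewrite /pcomp_fun !ffunE /=.
case ex: (f1 x) => [a|] //= Ha; apply/implyP.
case ey: (f1 y) => [b|] /=; last by rewrite (negbTE Ha).
move=> /eqP Hab.
have Hab' : a = b.
  by apply/eqP; move/forallP: h2 => /(_ a) /forallP /(_ b);
     rewrite Ha Hab eqxx.
subst b.
by move/forallP: h1 => /(_ x) /forallP /(_ y); rewrite ex ey eqxx.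
Qed.

Definition pcomp (r : nat) (d1 d2 : pperm r) : pperm r :=
  exist (fun f => is_pperm f) (pcomp_fun d1 d2) (pcomp_proof d1 d2).

Lemma pid_proof (r : nat) : is_pperm [ffun x : 'I_r => Some x].
Proof.
by apply/forallP => x; apply/forallP => y; rewrite !ffunE /=; apply/implyP.
Qed.
Definition pid (r : nat) : pperm r := exist (fun f => is_pperm f) _ (pid_proof r).

(* Elements of P'_r(z): formal C-linear combinations of partial
   permutations, i.e. coefficient functions. *)
Definition PAlg (r : nat) := {ffun pperm r -> CC}.

Definition pbasis (r : nat) (d : pperm r) : PAlg r :=
  [ffun d' => if d' == d then 1 else 0].

Definition pexp (r : nat) (d1 d2 : pperm r) : nat :=
  (r - #|pim d1 :|: pdom d2|)%N.

Definition pbasis_mul (r : nat) (z : CC) (d1 d2 : pperm r) : PAlg r :=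
  z ^+ pexp d1 d2 *: pbasis (pcomp d1 d2).

Definition pmul (r : nat) (z : CC) (a b : PAlg r) : PAlg r :=
  \sum_(d1 : pperm r) \sum_(d2 : pperm r)
     (a d1 * b d2) *: pbasis_mul z d1 d2.

Definition punit (r : nat) : PAlg r := pbasis (pid r).

Definition monoid_mul (r : nat) (a b : PAlg r) : PAlg r :=
  \sum_(d1 : pperm r) \sum_(d2 : pperm r)
     (a d1 * b d2) *: pbasis (pcomp d1 d2).

Definition palg_iso (r : nat) (z w : CC) (phi : PAlg r -> PAlg r) : Prop :=
  [/\ bijective phi,
      (forall (c : CC) (a b : PAlg r), phi (c *: a + b) = c *: phi a + phi b),
      (forall a b : PAlg r, phi (pmul z a b) = pmul w (phi a) (phi b))
    & phi (punit r) = punit r].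

(* Main.v *)
Require Import Defs.
From mathcomp Require Import all_boot all_algebra.
From mathcomp Require Import Rstruct complex.
From mathcomp Require Import zify.
Local Open Scope ring_scope.
Import GRing.Theory.
Set Implicit Arguments. Unset Strict Implicit.
From mathcomp Require Import ring.

Definition fo r (d : pperm r) (x : 'I_r) : 'I_r := odflt x (val d x).

Lemma fo_inj r (d : pperm r) x y : val d x != None -> val d y != None ->
  fo d x = fo d y -> x = y.
Proof.
rewrite /fo; case ex: (val d x) => [a|] //; case ey: (val d y) => [b|] // _ _ /= ab.
subst b; move/forallP: (valP d) => /(_ x)/forallP/(_ y).
by rewrite ex ey eqxx /= => /eqP.
Qed.

Lemma card_pim r (d : pperm r) : #|pim d| = #|pdom d|.
Proof.
have -> : pim d = fo d @: pdom d.
  apply/setP => y; rewrite inE; apply/existsP/imsetP.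
  - case=> x /eqP e; exists x; first by rewrite inE e.
    by rewrite /fo e.
  - case=> x; rewrite inE /fo; case e: (val d x) => [a|] // _ ->.
    by exists x; rewrite e.
apply: card_in_imset => x y; rewrite !inE; exact: fo_inj.
Qed.

Lemma card_comp r (d1 d2 : pperm r) :
  #|pim d1 :&: pdom d2| = #|pdom (Defs.pcomp d1 d2)|.
Proof.
have -> : pim d1 :&: pdom d2 = fo d1 @: pdom (Defs.pcomp d1 d2).
  apply/setP => y; rewrite !inE; apply/andP/imsetP.
  - case=> /existsP [x /eqP e] h; exists x; last by rewrite /fo e.
    by rewrite inE /= /pcomp_fun ffunE e.
  - case=> x; rewrite inE /= /pcomp_fun ffunE /fo.
    case e: (val d1 x) => [a|] //= h ->; split => //.
    by apply/existsP; exists x; rewrite e.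
apply: card_in_imset => x y; rewrite !inE /= /pcomp_fun !ffunE => hx hy.
by apply: fo_inj; [move: hx|move: hy]; case: (val d1 _).
Qed.

Lemma pexp_eq r (d1 d2 : pperm r) :
  (pexp d1 d2 + (r - #|pdom (Defs.pcomp d1 d2)|) = (r - #|pdom d1|) + (r - #|pdom d2|))%N.
Proof.
rewrite /pexp.
have hU := cardsUI (pim d1) (pdom d2).
rewrite card_comp card_pim in hU.
have h1 : (#|pim d1 :|: pdom d2| <= r)%N by rewrite -[X in (_ <= X)%N]card_ord max_card.
have h2 : (#|pdom d1| <= r)%N by rewrite -[X in (_ <= X)%N]card_ord max_card.
have h3 : (#|pdom d2| <= r)%N by rewrite -[X in (_ <= X)%N]card_ord max_card.
have h4 : (#|pdom (Defs.pcomp d1 d2)| <= r)%N by rewrite -[X in (_ <= X)%N]card_ord max_card.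
lia.
Qed.

Theorem corollary8p7 (r : nat) (z : CC) :
  (1 <= r)%N -> z != 0 ->
  (exists phi : PAlg r -> PAlg r, palg_iso z 1 phi) /\
  (forall a b : PAlg r, pmul 1 a b = monoid_mul a b).
Proof.
move=> _ z0.
pose lam (d : pperm r) : CC := z ^+ (r - #|pdom d|).
have lam0 d : lam d != 0 by rewrite /lam expf_neq0.
split; last first.
  move=> a b; rewrite /pmul /monoid_mul; apply: eq_bigr => d1 _.
  by apply: eq_bigr => d2 _; rewrite /pbasis_mul expr1n scale1r.
exists (fun a : PAlg r => [ffun d => lam d * a d]); split.
- exists (fun a : PAlg r => [ffun d => (lam d)^-1 * a d]) => a;
    apply/ffunP => d; by rewrite !ffunE mulrA ?mulVf ?mulfV ?lam0 ?mul1r.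
- move=> c a b; apply/ffunP => d; by rewrite !ffunE mulrDr mulrCA.
- move=> a b; apply/ffunP => d; rewrite /pmul ffunE !sum_ffunE mulr_sumr.
  apply: eq_bigr => d1 _; rewrite !sum_ffunE mulr_sumr; apply: eq_bigr => d2 _.
  rewrite /pbasis_mul !ffunE.
  case: eqP => [->|_]; last by rewrite !scaler0 mulr0.
  rewrite /GRing.scale /=.
  have h : z ^+ pexp d1 d2 * lam (Defs.pcomp d1 d2) = lam d1 * lam d2.
    by rewrite /lam -!exprD pexp_eq.
  rewrite expr1n.
  transitivity (a d1 * b d2 * (z ^+ pexp d1 d2 * lam (Defs.pcomp d1 d2))); first ring.
  rewrite h; ring.
- apply/ffunP => d; rewrite /punit /pbasis !ffunE /lam.
  case: eqP => [->|_]; last by rewrite mulr0.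
  have -> : pdom (pid r) = setT by apply/setP => x; rewrite !inE ffunE.
  by rewrite cardsT card_ord subnn expr0 mulr1.
Qed.
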